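(* Let $G$ be a $\lambda$-graph and $Q$ a query over $G$. Then $Q^{\#}$ is a sharing equivalence if and only if $[n]=[m]$ (equality of locally nameless terms) for all nodes $n,m$ with $n\,Q\,m$.
   Context: A pre-$\lambda$-graph is a directed graph whose nodes are of four kinds: an application node $@(n_1,n_2)$ has exactly two children, its left child $n_1$ and its right child $n_2$; an abstraction node $\lambda(n)$ has exactly one child, its body $n$; a free variable node has no children and carries an atom $\mathrm{id}(n)$ from a fixed set of atoms, distinct free variable nodes carrying distinct atoms; a bound variable node $\mathrm{var}(l)$ has exactly one outgoing binding edge, to an abstraction node $l$ (its binder). Letters $l,l'$ denote abstraction nodes. A trace is a finite sequence of directions from $\{\swarrow,\downarrow,\searrow\}$; $\epsilon$ is the empty trace and $d\cdot\tau$ is the trace $\tau$ extended by one final step $d$. Paths $n\xrightarrow{\tau}m$ are defined inductively: $n\xrightarrow{\epsilon}n$; if $n\xrightarrow{\tau}\lambda(m)$ then $n\xrightarrow{\downarrow\cdot\tau}m$; if $n\xrightarrow{\tau}@(m_1,m_2)$ then $n\xrightarrow{\swarrow\cdot\tau}m_1$ and $n\xrightarrow{\searrow\cdot\tau}m_2$ (binding edges are never followed). We write $n\xrightarrow{\tau}$ if $n\xrightarrow{\tau}m$ for some $m$. The path $n\xrightarrow{\tau}$ crosses a node $m$ if either $n\xrightarrow{\tau}m$, or $\tau=d\cdot\tau'$ and $n\xrightarrow{\tau'}$ crosses $m$. A root is a node $r$ such that the only path ending in $r$ has the empty trace. A node $m$ dominates $n$ if every path from a root to $n$ crosses $m$.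 A $\lambda$-graph is a pre-$\lambda$-graph that has finitely many nodes, is acyclic ($n\xrightarrow{\tau}n$ holds only for $\tau=\epsilon$), and is dominated (every bound variable node $\mathrm{var}(l)$ is dominated by its binder $l$). Two nodes are homogeneous if both are application nodes, or both abstraction nodes, or both free variable nodes, or both bound variable nodes; a binary relation $R$ on nodes is homogeneous if it only relates homogeneous nodes. Rules: $(\swarrow)$: $@(n_1,n_2)\,R\,@(m_1,m_2)$ implies $n_1\,R\,m_1$; $(\searrow)$: $@(n_1,n_2)\,R\,@(m_1,m_2)$ implies $n_2\,R\,m_2$; $(\downarrow)$: $\lambda(n)\,R\,\lambda(m)$ implies $n\,R\,m$; $(\circlearrowright)$: $\mathrm{var}(n)\,R\,\mathrm{var}(m)$ implies $n\,R\,m$. $R$ is propagated if closed under $(\swarrow),(\downarrow),(\searrow)$. $R$ is open if $n\,R\,m$ implies $n=m$ for all free variable nodes $n,m$. A blind bisimulation is a homogeneous propagated relation; a bisimulation is a blind bisimulation closed also under $(\circlearrowright)$. A blind sharing equivalence is a blind bisimulation that is an equivalence relation; a sharing equivalence is an open bisimulation that is an equivalence relation. $R^*$ denotes the reflexive–symmetric–transitive closure of $R$; $R^{\Downarrow}$ (propagation) is the smallest propagated relation containing $R$; $R^{\#}$ (spreading) is the smallest propagated equivalence relation containing $R$. A query over $G$ is a binary relation on the roots of $G$. Readback. Locally nameless terms: $t::=\underline{k}\mid \mathsf{x}\mid t\,s\mid \lambda.t$ with $k\in\mathbb N$ (bound variable as de Bruijn index) and $\mathsf{x}$ an atom (free variable);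 equality is syntactic. For a path $n\xrightarrow{\tau}$ crossing an abstraction node $l$, the index $\mathrm{idx}(l,n\xrightarrow{\tau})$ is defined by induction on the crossing: it is $0$ if $n\xrightarrow{\tau}l$; for $n\xrightarrow{d\cdot\tau}l'$ with $l'$ an abstraction node different from $l$ it is $\mathrm{idx}(l,n\xrightarrow{\tau})+1$; for $n\xrightarrow{d\cdot\tau}m$ with $m$ not an abstraction node it is $\mathrm{idx}(l,n\xrightarrow{\tau})$. For a root $r$ and a path $r\xrightarrow{\tau}n$, the readback $[r\xrightarrow{\tau}n]$ is: $\underline{\mathrm{idx}(l,r\xrightarrow{\tau})}$ if $n=\mathrm{var}(l)$ (well defined by domination); $\mathrm{id}(n)$ if $n$ is a free variable node; $\lambda.[r\xrightarrow{\downarrow\cdot\tau}m]$ if $n=\lambda(m)$; $[r\xrightarrow{\swarrow\cdot\tau}n_1]\,[r\xrightarrow{\searrow\cdot\tau}n_2]$ if $n=@(n_1,n_2)$. For a root $r$, $[r]:=[r\xrightarrow{\epsilon}r]$. *)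

(* Defs.v *)
From mathcomp Require Import all_boot.
Set Implicit Arguments. Unset Strict Implicit. Unset Printing Implicit Defensive.

(* A node's kind and its outgoing edges. [A] is the fixed set of atoms. *)
Inductive node (A V : Type) : Type :=
| App  of V & V
| Abs  of V
| FVar of A
| BVar of V.           (* var(l), binding edge to l *)
Arguments App {A V}. Arguments Abs {A V}. Arguments FVar {A V}. Arguments BVar {A V}.

Inductive dir := DLeft | DDown | DRight.

(* A trace is a list of directions; [d :: tau] is the trace d.tau,
   i.e. tau extended by one final step d. *)
Notation trace := (seq dir).

Section Graph.
Variables (A : Type) (V : finType) (g : V -> node A V).

Definition is_abs (n : V) : Prop := exists b, g n = Abs b.

Definition pre_lambda_graph : Prop :=
  (forall n l, g n = BVar l -> is_abs l) /\
  (forall n m a, g n = FVar a -> g m = FVar a -> n = m).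

(* Paths n --tau--> m (binding edges are never followed). *)
Inductive path : V -> trace -> V -> Prop :=
| path_nil n : path n [::] n
| path_down n tau m b : path n tau m -> g m = Abs b -> path n (DDown :: tau) b
| path_left n tau m m1 m2 : path n tau m -> g m = App m1 m2 -> path n (DLeft :: tau) m1
| path_right n tau m m1 m2 : path n tau m -> g m = App m1 m2 -> path n (DRight :: tau) m2.

Fixpoint crosses (n : V) (tau : trace) (m : V) : Prop :=
  path n tau m \/ (match tau with [::] => False | _ :: tau' => crosses n tau' m end).

Definition is_root (r : V) : Prop := forall n tau, path n tau r -> tau = [::].

Definition dominates (m n : V) : Prop :=
  forall r tau, is_root r -> path r tau n -> crosses r tau m.

Definition acyclic : Prop := forall n tau, path n tau n -> tau = [::].

Definition dominated : Prop := forall n l, g n = BVar l -> dominates l n.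

(* Finiteness is given by V being a finType. *)
Definition lambda_graph : Prop := pre_lambda_graph /\ acyclic /\ dominated.

Definition homogeneous (R : V -> V -> Prop) : Prop :=
  forall n m, R n m ->
    match g n, g m with
    | App _ _, App _ _ | Abs _, Abs _ | FVar _, FVar _ | BVar _, BVar _ => True
    | _, _ => False
    end.

Definition propagated (R : V -> V -> Prop) : Prop :=
  (forall n m n1 n2 m1 m2, R n m -> g n = App n1 n2 -> g m = App m1 m2 -> R n1 m1) /\
  (forall n m n1 n2 m1 m2, R n m -> g n = App n1 n2 -> g m = App m1 m2 -> R n2 m2) /\
  (forall n m n1 m1, R n m -> g n = Abs n1 -> g m = Abs m1 -> R n1 m1).

Definition closed_var (R : V -> V -> Prop) : Prop :=
  forall n m l l', R n m -> g n = BVar l -> g m = BVar l' -> R l l'.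

Definition open_rel (R : V -> V -> Prop) : Prop :=
  forall n m a b, R n m -> g n = FVar a -> g m = FVar b -> n = m.

Definition equivalence (R : V -> V -> Prop) : Prop :=
  (forall n, R n n) /\ (forall n m, R n m -> R m n) /\
  (forall n m p, R n m -> R m p -> R n p).

Definition blind_bisimulation (R : V -> V -> Prop) : Prop :=
  homogeneous R /\ propagated R.

Definition bisimulation (R : V -> V -> Prop) : Prop :=
  blind_bisimulation R /\ closed_var R.

Definition sharing_equivalence (R : V -> V -> Prop) : Prop :=
  open_rel R /\ bisimulation R /\ equivalence R.

Inductive spread (R : V -> V -> Prop) : V -> V -> Prop :=
| sp_base n m : R n m -> spread R n m
| sp_refl n : spread R n n
| sp_sym n m : spread R n m -> spread R m n
| sp_trans n m p : spread R n m -> spread R m p -> spread R n p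
| sp_left n m n1 n2 m1 m2 :
    spread R n m -> g n = App n1 n2 -> g m = App m1 m2 -> spread R n1 m1
| sp_right n m n1 n2 m1 m2 :
    spread R n m -> g n = App n1 n2 -> g m = App m1 m2 -> spread R n2 m2
| sp_down n m n1 m1 :
    spread R n m -> g n = Abs n1 -> g m = Abs m1 -> spread R n1 m1.

Definition query (Q : V -> V -> Prop) : Prop :=
  forall n m, Q n m -> is_root n /\ is_root m.

Inductive lnterm : Type :=
| LBound of nat
| LFree of A
| LApp of lnterm & lnterm
| LLam of lnterm.

Inductive Idx (l n : V) : trace -> nat -> Prop :=
| idx_here tau : path n tau l -> Idx l n tau 0
| idx_abs d tau l' b k :
    path n (d :: tau) l' -> g l' = Abs b -> l' <> l ->
    Idx l n tau k -> Idx l n (d :: tau) k.+1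
| idx_other d tau m k :
    path n (d :: tau) m -> ~ is_abs m ->
    Idx l n tau k -> Idx l n (d :: tau) k.

Inductive Readback (r : V) : trace -> V -> lnterm -> Prop :=
| rb_bvar tau n l k :
    path r tau n -> g n = BVar l -> Idx l r tau k -> Readback r tau n (LBound k)
| rb_fvar tau n a :
    path r tau n -> g n = FVar a -> Readback r tau n (LFree a)
| rb_abs tau n b t :
    path r tau n -> g n = Abs b -> Readback r (DDown :: tau) b t ->
    Readback r tau n (LLam t)
| rb_app tau n n1 n2 t1 t2 :
    path r tau n -> g n = App n1 n2 ->
    Readback r (DLeft :: tau) n1 t1 -> Readback r (DRight :: tau) n2 t2 ->
    Readback r tau n (LApp t1 t2).

Definition readback_root (r : V) (t : lnterm) : Prop := Readback r [::] r t.

Definition same_readback (n m : V) : Prop :=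
  exists t, readback_root n t /\ readback_root m t.

End Graph.

(* Main.v *)
Require Import Defs.
From mathcomp Require Import all_boot.
From Stdlib Require Import Relation_Operators.
From mathcomp Require Import zify.

Set Implicit Arguments. Unset Strict Implicit. Unset Printing Implicit Defensive.

Section Proofs.
Variables (A : Type) (V : finType) (g : V -> node A V).

Local Notation gpath := (Defs.path g).

Definition stepf (m : V) (d : dir) : option V :=
  match d, g m with
  | DDown, Abs b => Some b
  | DLeft, App a _ => Some a
  | DRight, App _ b => Some b
  | _, _ => None
  end.

Fixpoint walk (n : V) (tau : trace) : option V :=
  match tau with
  | [::] => Some n
  | d :: tau' => obind (fun m => stepf m d) (walk n tau')
  end.

Lemma path_walk n tau m : gpath n tau m <-> walk n tau = Some m.
Proof.
split.
- move=> H; elim: H => [n0|n0 t0 m0 b _ IH e|n0 t0 m0 m1 m2 _ IH e|n0 t0 m0 m1 m2 _ IH e] //=;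
    by rewrite IH /= /stepf e.
- elim: tau m => [|d tau IH] m /=; first by case=> ->; constructor.
  case E: (walk n tau) => [x|] //= H.
  have P := IH _ E.
  move: H; rewrite /stepf; case: d; case Eg: (g x) => [a b|b|a|b] //= [<-].
  - exact: path_left P Eg.
  - exact: path_down P Eg.
  - exact: path_right P Eg.
Qed.

Lemma path_det n tau m m' : gpath n tau m -> gpath n tau m' -> m = m'.
Proof. by move=> /path_walk H1 /path_walk; rewrite H1; case. Qed.

Lemma walk_cat n t1 t2 :
  walk n (t2 ++ t1) = obind (fun m => walk m t2) (walk n t1).
Proof.
elim: t2 => [|d t2 IH] /=; first by case: (walk n t1).
by rewrite IH; case: (walk n t1).
Qed.

Lemma path_cat n t1 m t2 p : gpath n t1 m -> gpath m t2 p -> gpath n (t2 ++ t1) p.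
Proof. by move=> /path_walk H1 /path_walk H2; apply/path_walk; rewrite walk_cat H1. Qed.

Lemma path_split n t1 t2 p : gpath n (t2 ++ t1) p ->
  exists m, gpath n t1 m /\ gpath m t2 p.
Proof.
move/path_walk; rewrite walk_cat; case E: (walk n t1) => [m|] //= H.
by exists m; split; apply/path_walk.
Qed.

Definition step (m : V) (d : dir) (c : V) : Prop := stepf m d = Some c.

Lemma path_cons n d tau c :
  gpath n (d :: tau) c <-> exists m, gpath n tau m /\ step m d c.
Proof.
split.
- move/path_walk => /=; case E: (walk n tau) => [m|] //= H.
  by exists m; split=> //; apply/path_walk.
- case=> m [/path_walk H1 H2]; apply/path_walk => /=; by rewrite H1.
Qed.

Lemma path_step1 m d c : step m d c -> gpath m [:: d] c.
Proof. move=> H; apply/path_cons; exists m; split=> //; constructor. Qed.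

Lemma path_ex_prefix n d tau c : gpath n (d :: tau) c -> exists m, gpath n tau m.
Proof. by case/path_cons=> m [? _]; exists m. Qed.


Lemma walk_drop_some n tau m i : walk n tau = Some m -> exists x, walk n (drop i tau) = Some x.
Proof.
move=> H; move: H; rewrite -{1}(cat_take_drop i tau) walk_cat.
by case: (walk n (drop i tau)) => [x|] //= _; exists x.
Qed.

Lemma path_len (Hac : acyclic g) n tau m : gpath n tau m -> size tau < #|V|.
Proof.
move/path_walk=> H.
pose f (i : 'I_(size tau).+1) : V := odflt n (walk n (drop i tau)).
have Hf : injective f.
  have key : forall i j : 'I_(size tau).+1, i < j -> f i = f j -> False.
    move=> i j lij E.
    have [x Hx] := walk_drop_some i H.
    have [y Hy] := walk_drop_some j H.
    have Ei : drop i tau = take (j - i) (drop i tau) ++ drop j tau.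
      by rewrite -{1}(cat_take_drop (j - i) (drop i tau)) drop_drop subnK // ltnW.
    move: Hx; rewrite Ei walk_cat Hy /= => Hx.
    have fx : f i = x by rewrite /f Ei walk_cat Hy /= Hx.
    have fy : f j = y by rewrite /f Hy.
    have Hp : gpath y (take (j - i) (drop i tau)) y.
      by apply/path_walk; rewrite Hx -fx E fy.
    have := Hac _ _ Hp; move/(f_equal size); rewrite size_take size_drop /=.
    have jle : j <= size tau by rewrite -ltnS.
    move: lij jle; case: i {E Ei Hx fx Hp} => i /= _; case: j {Hy fy} => j /= _.
    move=> lij jle; rewrite /minn; case: ifP => _; lia.
  move=> i j E; case: (ltngtP i j) => [lt|lt|/val_inj //].
  - by case: (key _ _ lt E).
  - by case: (key _ _ lt (esym E)).
have := leq_card f Hf; by rewrite card_ord.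
Qed.


Lemma hom_abs R x y b : homogeneous g R -> R x y -> g x = Abs b -> exists b', g y = Abs b'.
Proof. by move=> Hh /Hh; rewrite /=; move=> + E; rewrite E; case: (g y) => // b' _; exists b'. Qed.

Lemma hom_app R x y a b : homogeneous g R -> R x y -> g x = App a b -> exists a' b', g y = App a' b'.
Proof. by move=> Hh /Hh; move=> + E; rewrite E; case: (g y) => // a' b' _; exists a', b'. Qed.

Lemma hom_fvar R x y a : homogeneous g R -> R x y -> g x = FVar a -> exists b, g y = FVar b.
Proof. by move=> Hh /Hh; move=> + E; rewrite E; case: (g y) => // b' _; exists b'. Qed.

Lemma hom_bvar R x y a : homogeneous g R -> R x y -> g x = BVar a -> exists b, g y = BVar b.
Proof. by move=> Hh /Hh; move=> + E; rewrite E; case: (g y) => // b' _; exists b'. Qed.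

Lemma transport R x y rho z : homogeneous g R -> propagated g R ->
  R x y -> gpath x rho z -> exists w, gpath y rho w /\ R z w.
Proof.
move=> Hh [Hl [Hr Hd]] Rxy P; move: Rxy; elim: P => {x rho z}.
- by move=> n Rxy; exists y; split=> //; constructor.
- move=> n t m b _ IH E /IH [w [Pw Rmw]].
  have [b' E'] := hom_abs Hh Rmw E.
  exists b'; split; [exact: path_down Pw E' | exact: Hd Rmw E E'].
- move=> n t m m1 m2 _ IH E /IH [w [Pw Rmw]].
  have [a' [b' E']] := hom_app Hh Rmw E.
  exists a'; split; [exact: path_left Pw E' | exact: Hl Rmw E E'].
- move=> n t m m1 m2 _ IH E /IH [w [Pw Rmw]].
  have [a' [b' E']] := hom_app Hh Rmw E.
  exists b'; split; [exact: path_right Pw E' | exact: Hr Rmw E E'].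
Qed.

Fixpoint rep (rho : trace) (k : nat) : trace :=
  match k with 0 => rho | k'.+1 => rho ++ rep rho k' end.

Lemma size_rep rho k : rho <> [::] -> k < size (rep rho k).
Proof.
case: rho => // d rho _; elim: k => [|k IH] //=.
by rewrite size_cat /= ltnS (leq_trans IH) // leq_addl.
Qed.

Lemma no_self_rel R x y rho : acyclic g -> equivalence R -> homogeneous g R -> propagated g R ->
  R x y -> gpath x rho y -> rho <> [::] -> False.
Proof.
move=> Hac [Rr [Rs Rt]] Hh Hp Rxy P Hne.
have H : forall k, exists z, gpath x (rep rho k) z /\ R x z.
  elim=> [|k [z [Pz Rxz]]]; first by exists y.
  have [w [Pw Ryw]] := transport Hh Hp Rxz P.
  exists w; split; [exact: path_cat Pz Pw | exact: Rt _ _ _ Rxy Ryw].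
have [z [Pz _]] := H #|V|.
have := path_len Hac Pz.
by rewrite ltnNge (ltnW (size_rep _ Hne)).
Qed.


Lemma idx_cross l r tau k : Idx g l r tau k ->
  exists rho1 rho2 e, tau = rho2 ++ rho1 /\ gpath r rho1 l /\ gpath l rho2 e /\ gpath r tau e.
Proof.
elim=> {tau k}.
- by move=> tau P; exists tau, [::], l; split=> //; split=> //; split=> //; constructor.
- move=> d tau l' b k P _ _ _ [rho1 [rho2 [e [Et [P1 [P2 P3]]]]]].
  case/path_cons: (P) => m [Pm Sm]; rewrite (path_det Pm P3) in Sm.
  exists rho1, (d :: rho2), l'; split; first by rewrite Et.
  by split=> //; split=> //; apply/path_cons; exists e.
- move=> d tau m k P _ _ [rho1 [rho2 [e [Et [P1 [P2 P3]]]]]].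
  case/path_cons: (P) => m' [Pm Sm]; rewrite (path_det Pm P3) in Sm.
  exists rho1, (d :: rho2), m; split; first by rewrite Et.
  by split=> //; split=> //; apply/path_cons; exists e.
Qed.

Lemma idx_nil_inv l r k : Idx g l r [::] k -> l = r /\ k = 0.
Proof. move=> I; inversion I; subst; split=> //; by inversion H. Qed.

Lemma idx_cons_inv l r d rho k : Idx g l r (d :: rho) k ->
  (gpath r (d :: rho) l /\ k = 0) \/
  (exists l0 b k0, gpath r (d :: rho) l0 /\ g l0 = Abs b /\ l0 <> l /\ Idx g l r rho k0 /\ k = k0.+1) \/
  (exists m, gpath r (d :: rho) m /\ ~ is_abs g m /\ Idx g l r rho k).
Proof.
move=> I; inversion I; subst.
- by left.
- by right; left; exists l', b, k0.
- by right; right; exists m.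
Qed.

Lemma here_cross R r r' d rho l l' k0 : acyclic g -> equivalence R -> homogeneous g R ->
  propagated g R -> R r r' -> gpath r (d :: rho) l -> Idx g l' r' rho k0 -> R l l' -> False.
Proof.
move=> Hac [Rr [Rs Rt]] Hh Hp Rrr P I Rll.
have [w [Pw Rlw]] := transport Hh Hp Rrr P.
have [rho1 [rho2 [e [Et [P1 [P2 P3]]]]]] := idx_cross I.
case/path_cons: Pw => m [Pm Sm]; rewrite (path_det Pm P3) in Sm.
have P4 : gpath l' (d :: rho2) w by apply/path_cons; exists e.
apply: (no_self_rel Hac (conj Rr (conj Rs Rt)) Hh Hp _ P4) => //.
exact: Rt (Rs _ _ Rll) Rlw.
Qed.

Lemma idx_rel R r r' : acyclic g -> equivalence R -> homogeneous g R ->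
  propagated g R -> R r r' ->
  forall tau l l' k k', Idx g l r tau k -> Idx g l' r' tau k' -> R l l' -> k = k'.
Proof.
move=> Hac Heq Hh Hp Rrr; have [Rr [Rs Rt]] := Heq.
elim=> [|d rho IH] l l' k k'.
  by move=> /idx_nil_inv [_ ->] /idx_nil_inv [_ ->].
move=> I1 I2 Rll.
have endp : forall e e', gpath r (d :: rho) e -> gpath r' (d :: rho) e' -> R e e'.
  move=> e e' P P'; have [w [Pw Rw]] := transport Hh Hp Rrr P.
  by rewrite (path_det P' Pw).
move/idx_cons_inv: I1 => H1; move/idx_cons_inv: I2 => H2.
case: H1 => [[P1 ->]|[[l0 [b [k0 [P1 [E1 [N1 [I1 ->]]]]]]]|[m [P1 [N1 I1]]]]];
case: H2 => [[P2 ->]|[[l0' [b' [k0' [P2 [E2 [N2 [I2 ->]]]]]]]|[m' [P2 [N2 I2]]]]] //.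
- by case: (here_cross Hac Heq Hh Hp Rrr P1 I2 Rll).
- by case: (here_cross Hac Heq Hh Hp Rrr P1 I2 Rll).
- by case: (here_cross Hac Heq Hh Hp (Rs _ _ Rrr) P2 I1 (Rs _ _ Rll)).
- by rewrite (IH _ _ _ _ I1 I2 Rll).
- have [b2 E2] := hom_abs Hh (endp _ _ P1 P2) E1; by case: N2; exists b2.
- by case: (here_cross Hac Heq Hh Hp (Rs _ _ Rrr) P2 I1 (Rs _ _ Rll)).
- have [b2 E2'] := hom_abs Hh (Rs _ _ (endp _ _ P1 P2)) E2; by case: N1; exists b2.
- exact: IH I1 I2 Rll.
Qed.


Lemma idx_exists r l : forall tau x, gpath r tau x -> crosses g r tau l -> exists k, Idx g l r tau k.
Proof.
elim=> [|d rho IH] x P C.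
  case: C => [P0|//]; exists 0; exact: idx_here.
case: (eqVneq x l) => [Exl|Nxl].
  by exists 0; apply: idx_here; rewrite -Exl.
case: C => [P0|C]; first by case/eqP: Nxl; exact: path_det P P0.
have [m Pm] := path_ex_prefix P.
have [k Ik] := IH _ Pm C.
case Eg: (g x) => [a b|b|a|b].
- exists k; apply: idx_other P _ Ik; by case=> b' E; rewrite Eg in E.
- exists k.+1; apply: idx_abs P Eg _ Ik; exact/eqP.
- exists k; apply: idx_other P _ Ik; by case=> b' E; rewrite Eg in E.
- exists k; apply: idx_other P _ Ik; by case=> b' E; rewrite Eg in E.
Qed.

Lemma rb_exists r : lambda_graph g -> is_root g r ->
  forall tau x, gpath r tau x -> exists t, Readback g r tau x t.
Proof.
move=> [Hpre [Hac Hdom]] Hr.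
suff H : forall N tau x, #|V| - size tau <= N -> gpath r tau x -> exists t, Readback g r tau x t.
  by move=> tau x; apply: (H _ _ _ (leqnn _)).
elim=> [|N IH] tau x HN P.
  by have := path_len Hac P; lia.
have Hlt := path_len Hac P.
have HN' : #|V| - size (DLeft :: tau) <= N by move: HN; rewrite /= subnS; case: (#|V| - size tau) => [|z].
have HN'' : #|V| - size (DDown :: tau) <= N by move: HN; rewrite /= subnS; case: (#|V| - size tau) => [|z].
have HN3 : #|V| - size (DRight :: tau) <= N by move: HN; rewrite /= subnS; case: (#|V| - size tau) => [|z].
case Eg: (g x) => [a b|b|a|l].
- have [t1 R1] := IH _ _ HN' (path_left P Eg).
  have [t2 R2] := IH _ _ HN3 (path_right P Eg).
  by exists (LApp t1 t2); apply: rb_app P Eg R1 R2.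
- have [t1 R1] := IH _ _ HN'' (path_down P Eg).
  by exists (LLam t1); apply: rb_abs P Eg R1.
- by exists (LFree a); apply: rb_fvar P Eg.
- have C := Hdom _ _ Eg r tau Hr P.
  have [k Ik] := idx_exists P C.
  by exists (LBound A k); apply: rb_bvar P Eg Ik.
Qed.


Lemma transfer R r r' : lambda_graph g -> sharing_equivalence g R -> R r r' -> is_root g r' ->
  forall tau x t, Readback g r tau x t -> forall x', gpath r' tau x' -> Readback g r' tau x' t.
Proof.
move=> [Hpre [Hac Hdom]] [Hop [[[Hh Hp] Hcv] Heq]] Rrr Hr'.
have rel : forall tau x x', gpath r tau x -> gpath r' tau x' -> R x x'.
  move=> tau x x' P P'; have [w [Pw Rw]] := transport Hh Hp Rrr P.
  by rewrite (path_det P' Pw).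
move=> tau x t Rb; elim: Rb => {tau x t}.
- move=> tau n l k P E I x' P'.
  have Rn := rel _ _ _ P P'.
  have [l' E'] := hom_bvar Hh Rn E.
  have Rl := Hcv _ _ _ _ Rn E E'.
  have [k' I'] := idx_exists P' (Hdom _ _ E' r' tau Hr' P').
  rewrite (idx_rel Hac Heq Hh Hp Rrr I I' Rl).
  exact: rb_bvar P' E' I'.
- move=> tau n a P E x' P'.
  have Rn := rel _ _ _ P P'.
  have [b E'] := hom_fvar Hh Rn E.
  have En := Hop _ _ _ _ Rn E E'.
  rewrite -En in P' *; exact: rb_fvar P' E.
- move=> tau n b t P E _ IH x' P'.
  have Rn := rel _ _ _ P P'.
  have [b' E'] := hom_abs Hh Rn E.
  apply: (rb_abs P' E'); apply: IH; exact: path_down P' E'.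
- move=> tau n n1 n2 t1 t2 P E _ IH1 _ IH2 x' P'.
  have Rn := rel _ _ _ P P'.
  have [a' [b' E']] := hom_app Hh Rn E.
  apply: (rb_app P' E'); [apply: IH1; exact: path_left P' E' | apply: IH2; exact: path_right P' E'].
Qed.


Definition kind (x : node A V) : nat :=
  match x with App _ _ => 0 | Abs _ => 1 | FVar _ => 2 | BVar _ => 3 end.

Definition ukind (u : lnterm A) : nat :=
  match u with LApp _ _ => 0 | LLam _ => 1 | LFree _ => 2 | LBound _ => 3 end.

Lemma rb_kind r tau n u : Readback g r tau n u -> kind (g n) = ukind u.
Proof. by case=> [? ? ? ? _ -> _|? ? ? _ ->|? ? ? ? _ -> _|? ? ? ? ? ? _ -> _ _]. Qed.

Lemma rb_inv_abs r tau m u b : Readback g r tau m u -> g m = Abs b ->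
  exists t, u = LLam t /\ Readback g r (DDown :: tau) b t.
Proof.
move=> H E; inversion H; subst; rewrite E in H1; try discriminate.
by case: H1 => ->; exists t.
Qed.

Lemma rb_inv_app r tau m u a b : Readback g r tau m u -> g m = App a b ->
  exists t1 t2, u = LApp t1 t2 /\ Readback g r (DLeft :: tau) a t1 /\ Readback g r (DRight :: tau) b t2.
Proof.
move=> H E; inversion H; subst; rewrite E in H1; try discriminate.
by case: H1 => -> ->; exists t1, t2.
Qed.

Lemma rb_inv_lam r tau m t : Readback g r tau m (LLam t) ->
  exists b, g m = Abs b /\ Readback g r (DDown :: tau) b t.
Proof. move=> H; inversion H; subst; by exists b. Qed.

Lemma rb_inv_lapp r tau m t1 t2 : Readback g r tau m (LApp t1 t2) ->
  exists a b, g m = App a b /\ Readback g r (DLeft :: tau) a t1 /\ Readback g r (DRight :: tau) b t2.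
Proof. move=> H; inversion H; subst; by exists n1, n2. Qed.

Lemma rb_inv_free r tau m a : Readback g r tau m (LFree a) -> g m = FVar a.
Proof. by move=> H; inversion H. Qed.

Lemma rb_inv_bound r tau m k : Readback g r tau m (LBound A k) ->
  exists l, g m = BVar l /\ Idx g l r tau k.
Proof. move=> H; inversion H; subst; by exists l. Qed.

Lemma joint r r' t : Readback g r [::] r t -> Readback g r' [::] r' t ->
  forall tau n n', gpath r tau n -> gpath r' tau n' ->
  exists u, Readback g r tau n u /\ Readback g r' tau n' u.
Proof.
move=> R1 R2; elim=> [|d rho IH] n n' P P'.
  have <- := path_det (path_nil g r) P; have <- := path_det (path_nil g r') P'.
  by exists t.
case/path_cons: P => m [Pm Sm]; case/path_cons: P' => m' [Pm' Sm'].
have [u [U1 U2]] := IH _ _ Pm Pm'.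
move: Sm Sm'; rewrite /step /stepf; case: d.
- case E: (g m) => [a b|b|a|b] // [<-].
  have [t1 [t2 [Eu [Q1 _]]]] := rb_inv_app U1 E; rewrite Eu in U2.
  have [a' [b' [E' [Q1' _]]]] := rb_inv_lapp U2.
  by rewrite E' => [[<-]]; exists t1.
- case E: (g m) => [a b|b|a|b] // [<-].
  have [t1 [Eu Q1]] := rb_inv_abs U1 E; rewrite Eu in U2.
  have [b' [E' Q1']] := rb_inv_lam U2.
  by rewrite E' => [[<-]]; exists t1.
- case E: (g m) => [a b|b|a|b] // [<-].
  have [t1 [t2 [Eu [_ Q1]]]] := rb_inv_app U1 E; rewrite Eu in U2.
  have [a' [b' [E' [_ Q1']]]] := rb_inv_lapp U2.
  by rewrite E' => [[<-]]; exists t2.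
Qed.

Lemma idx_pos r r' l l' (Habs : is_abs g l) (Habs' : is_abs g l')
  (Hk : forall s x x', gpath r s x -> gpath r' s x' -> (is_abs g x <-> is_abs g x')) :
  forall tau k k', Idx g l r tau k -> Idx g l' r' tau k' -> k = k' ->
  exists s, gpath r s l /\ gpath r' s l'.
Proof.
elim=> [|d rho IH] k k'.
  move=> /idx_nil_inv [-> _] /idx_nil_inv [-> _] _; exists [::]; split; constructor.
move/idx_cons_inv => H1; move/idx_cons_inv => H2.
case: H1 => [[P1 ->]|[[l0 [b [k0 [P1 [E1 [N1 [I1 ->]]]]]]]|[m [P1 [N1 I1]]]]];
case: H2 => [[P2 ->]|[[l0' [b' [k0' [P2 [E2 [N2 [I2 ->]]]]]]]|[m' [P2 [N2 I2]]]]] //.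
- by move=> _; exists (d :: rho).
- move=> _; have [E _] := Hk _ _ _ P1 P2; by case: N2; apply: E.
- move=> [Ek]; exact: IH I1 I2 Ek.
- move=> _; have [E _] := Hk _ _ _ P1 P2; by case: N2; apply: E; exists b.
- move=> _; have [_ E] := Hk _ _ _ P1 P2; by case: N1; apply: E.
- move=> _; have [_ E] := Hk _ _ _ P1 P2; by case: N1; apply: E; exists b'.
- exact: IH I1 I2.
Qed.


Lemma is_abs_kind x : is_abs g x <-> kind (g x) = 1.
Proof.
split; first by case=> b ->.
by rewrite /is_abs; case: (g x) => // b _; exists b.
Qed.

Definition Srel (Q : V -> V -> Prop) (n m : V) : Prop :=
  exists r r' tau, Q r r' /\ gpath r tau n /\ gpath r' tau m.

Section Back.
Variables (Q : V -> V -> Prop).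
Hypothesis Hpre : pre_lambda_graph g.
Hypothesis Hq : forall n m, Q n m -> same_readback g n m.

Lemma S_rb n m : Srel Q n m -> exists r r' tau u, Q r r' /\ gpath r tau n /\ gpath r' tau m /\
  Readback g r tau n u /\ Readback g r' tau m u.
Proof.
case=> r [r' [tau [Qr [P P']]]].
have [t [R1 R2]] := Hq Qr.
have [u [U1 U2]] := joint R1 R2 P P'.
by exists r, r', tau, u.
Qed.

Lemma S_kind n m : Srel Q n m -> kind (g n) = kind (g m).
Proof.
case/S_rb=> r [r' [tau [u [_ [_ [_ [U1 U2]]]]]]].
by rewrite (rb_kind U1) (rb_kind U2).
Qed.

Lemma S_open n m a b : Srel Q n m -> g n = FVar a -> g m = FVar b -> n = m.
Proof.
case/S_rb=> r [r' [tau [u [_ [_ [_ [U1 U2]]]]]]] E1 E2.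
have := rb_kind U1; rewrite E1; case: u U1 U2 => // a' U1 U2 _.
have F1 := rb_inv_free U1; have F2 := rb_inv_free U2.
case: Hpre => _ Hd; exact: Hd F1 F2.
Qed.

Lemma S_var n m l l' : Srel Q n m -> g n = BVar l -> g m = BVar l' -> Srel Q l l'.
Proof.
case/S_rb=> r [r' [tau [u [Qr [P [P' [U1 U2]]]]]]] E1 E2.
have := rb_kind U1; rewrite E1; case: u U1 U2 => // k U1 U2 _.
have [l0 [F1 I1]] := rb_inv_bound U1; have [l0' [F2 I2]] := rb_inv_bound U2.
rewrite E1 in F1; case: F1 => <- in I1; rewrite E2 in F2; case: F2 => <- in I2.
case: Hpre => Hb _.
have [t [R1 R2]] := Hq Qr.
have Hk : forall s x x', gpath r s x -> gpath r' s x' -> (is_abs g x <-> is_abs g x').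
  move=> s x x' Px Px'; have [v [V1 V2]] := joint R1 R2 Px Px'.
  by rewrite !is_abs_kind (rb_kind V1) (rb_kind V2).
have [s [Ps Ps']] := idx_pos (Hb _ _ E1) (Hb _ _ E2) Hk I1 I2 (erefl k).
by exists r, r', s.
Qed.

Lemma spread_step m m' d n n' : spread g Q m m' -> step m d n -> step m' d n' -> spread g Q n n'.
Proof.
move=> Sm; rewrite /step /stepf; case: d;
case E: (g m) => [a b|b|a|b] //; case E': (g m') => [a' b'|b'|a''|b''] // [<-] [<-].
- exact: sp_left Sm E E'.
- exact: sp_down Sm E E'.
- exact: sp_right Sm E E'.
Qed.

Lemma spread_path r r' : spread g Q r r' ->
  forall tau n n', gpath r tau n -> gpath r' tau n' -> spread g Q n n'.
Proof.
move=> Sr; elim=> [|d rho IH] n n' P P'.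
  by rewrite -(path_det (path_nil g r) P) -(path_det (path_nil g r') P').
case/path_cons: P => m [Pm Sm]; case/path_cons: P' => m' [Pm' Sm'].
exact: spread_step (IH _ _ Pm Pm') Sm Sm'.
Qed.

Lemma S_spread n m : Srel Q n m -> spread g Q n m.
Proof. case=> r [r' [tau [Qr [P P']]]]; exact: spread_path (sp_base g Qr) _ _ _ P P'. Qed.

Local Notation C := (clos_refl_sym_trans V (Srel Q)).

Lemma C_kind n m : C n m -> kind (g n) = kind (g m).
Proof.
elim=> {n m} [n m /S_kind //|//|n m _ -> //|n p m _ -> _ ->] //.
Qed.

Lemma C_app n m a b c d : C n m -> g n = App a b -> g m = App c d -> C a c /\ C b d.
Proof.
move=> H; elim: H a b c d => {n m}.
- move=> n m S a b c d E1 E2; case: S => r [r' [tau [Qr [P P']]]]; split; apply: rst_step.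
  + exists r, r', (DLeft :: tau); split; [exact: Qr|].
    by split; [exact: path_left P E1 | exact: path_left P' E2].
  + exists r, r', (DRight :: tau); split; [exact: Qr|].
    by split; [exact: path_right P E1 | exact: path_right P' E2].
- move=> n a b c d -> [-> ->]; split; exact: rst_refl.
- move=> n m _ IH a b c d E1 E2; have [H1 H2] := IH _ _ _ _ E2 E1; split; exact: rst_sym.
- move=> n p m H1 IH1 H2 IH2 a b c d E1 E2.
  have := C_kind H1; rewrite E1; case Ep: (g p) => [e f|e|e|e] // _.
  have [X1 X2] := IH1 _ _ _ _ E1 Ep; have [Y1 Y2] := IH2 _ _ _ _ Ep E2.
  split; [exact: rst_trans X1 Y1 | exact: rst_trans X2 Y2].
Qed.

Lemma C_abs n m a c : C n m -> g n = Abs a -> g m = Abs c -> C a c.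
Proof.
move=> H; elim: H a c => {n m}.
- move=> n m S a c E1 E2; apply: rst_step; case: S => r [r' [tau [Qr [P P']]]].
  exists r, r', (DDown :: tau); split; [exact: Qr|]; split; [exact: path_down P E1 | exact: path_down P' E2].
- move=> n a c -> [->]; exact: rst_refl.
- move=> n m _ IH a c E1 E2; apply: rst_sym; exact: IH E2 E1.
- move=> n p m H1 IH1 H2 IH2 a c E1 E2.
  have := C_kind H1; rewrite E1; case Ep: (g p) => [e f|e|e|e] // _.
  exact: rst_trans (IH1 _ _ E1 Ep) (IH2 _ _ Ep E2).
Qed.

Lemma C_open n m : C n m -> forall a b, g n = FVar a -> g m = FVar b -> n = m.
Proof.
elim=> {n m}.
- move=> n m S a b; exact: S_open S.
- by [].
- move=> n m _ IH a b E1 E2; by rewrite (IH _ _ E2 E1).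
- move=> n p m H1 IH1 H2 IH2 a b E1 E2.
  have := C_kind H1; rewrite E1; case Ep: (g p) => [e f|e|e|e] // _.
  by rewrite (IH1 _ _ E1 Ep) (IH2 _ _ Ep E2).
Qed.

Lemma C_var n m : C n m -> forall l l', g n = BVar l -> g m = BVar l' -> spread g Q l l'.
Proof.
elim=> {n m}.
- move=> n m S l l' E1 E2; exact: S_spread (S_var S E1 E2).
- by move=> n l l' -> [->]; exact: sp_refl.
- move=> n m _ IH l l' E1 E2; apply: sp_sym; exact: IH E2 E1.
- move=> n p m H1 IH1 H2 IH2 l l' E1 E2.
  have := C_kind H1; rewrite E1; case Ep: (g p) => [e f|e|e|e] // _.
  exact: sp_trans (IH1 _ _ E1 Ep) (IH2 _ _ Ep E2).
Qed.

Lemma spread_C n m : spread g Q n m -> C n m.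
Proof.
elim=> {n m}.
- move=> n m Qnm; apply: rst_step; exists n, m, [::]; split=> //; split; constructor.
- move=> n; exact: rst_refl.
- move=> n m _ IH; exact: rst_sym.
- move=> n m p _ IH1 _ IH2; exact: rst_trans IH1 IH2.
- move=> n m n1 n2 m1 m2 _ IH E1 E2; exact: (C_app IH E1 E2).1.
- move=> n m n1 n2 m1 m2 _ IH E1 E2; exact: (C_app IH E1 E2).2.
- move=> n m n1 m1 _ IH E1 E2; exact: C_abs IH E1 E2.
Qed.

Lemma back_dir : sharing_equivalence g (spread g Q).
Proof.
split; [|split; [split; [split|]|]].
- move=> n m a b /spread_C H; exact: C_open H _ _.
- move=> n m /spread_C/C_kind; case: (g n) => [? ?|?|?|?]; case: (g m) => [? ?|?|?|?] //.
- split; [|split].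
  + exact: sp_left.
  + exact: sp_right.
  + exact: sp_down.
- move=> n m l l' /spread_C H; exact: C_var H _ _.
- split; [exact: sp_refl|split; [exact: sp_sym|exact: sp_trans]].
Qed.

End Back.

End Proofs.

Theorem mainTheorem3 (A : Type) (V : finType) (g : V -> node A V)
    (Q : V -> V -> Prop) :
  lambda_graph g -> query g Q ->
  (sharing_equivalence g (spread g Q) <->
   forall n m, Q n m -> same_readback g n m).
Proof.
move=> Hlg Hq; split.
- move=> Hse n m Qnm.
  have [Rn Rm] := Hq _ _ Qnm.
  have [t Rt] := rb_exists Hlg Rn (path_nil g n).
  exists t; split=> //.
  exact: transfer Hlg Hse (sp_base g Qnm) Rm _ _ _ Rt _ (path_nil g m).
- move=> H; case: Hlg => Hpre _; exact: back_dir Hpre H.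
Qed.
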